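(* Let $a,b$ be smooth real functions of one variable and $f(x,y)=a(x)x+b(x)y$. On any open set $U\subset\mathbb{R}^2$ on which the three foliations given by the level curves $x=\text{const}$, $y=\text{const}$ and $f(x,y)=\text{const}$ form a 3-web (i.e. are pairwise transversal), this 3-web is linearizable: near every point of $U$ there is a local diffeomorphism onto an open subset of $\mathbb{R}^2$ carrying the leaves of all three foliations onto (open pieces of) straight lines.
   Context: A 3-web on a 2-dimensional manifold is given by three foliations by smooth curves in general position (pairwise transversal). A 3-web is linear if all three foliations consist of straight lines; it is linearizable if it is locally equivalent to a linear web via a local diffeomorphism. *)

(* Defs.v *)
From Stdlib Require Import Reals.
Open Scope R_scope.

Definition pt := (R * R)%type.

Definition smooth1 (a : R -> R) : Prop :=
  exists D : nat -> R -> R,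
    D O = a /\ forall (n : nat) (x : R), derivable_pt_lim (D n) x (D (S n) x).

Definition open2 (U : pt -> Prop) : Prop :=
  forall p, U p -> exists e, 0 < e /\
    forall q, Rabs (fst q - fst p) < e -> Rabs (snd q - snd p) < e -> U q.

Definition partial_x (g : pt -> R) (p : pt) (l : R) : Prop :=
  derivable_pt_lim (fun t => g (t, snd p)) (fst p) l.
Definition partial_y (g : pt -> R) (p : pt) (l : R) : Prop :=
  derivable_pt_lim (fun t => g (fst p, t)) (snd p) l.

Definition cont2_at (h : pt -> R) (p : pt) : Prop :=
  forall e, 0 < e -> exists d, 0 < d /\
    forall q, Rabs (fst q - fst p) < d -> Rabs (snd q - snd p) < d ->
      Rabs (h q - h p) < e.

Definition smooth2 (V : pt -> Prop) (g : pt -> R) : Prop :=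
  exists D : nat -> nat -> pt -> R,
    (forall p, V p -> D O O p = g p) /\
    forall (i j : nat) (p : pt), V p ->
      partial_x (D i j) p (D (S i) j p) /\
      partial_y (D i j) p (D i (S j) p) /\
      cont2_at (D i j) p.

Definition grad_at (g : pt -> R) (p : pt) (v : pt) : Prop :=
  partial_x g p (fst v) /\ partial_y g p (snd v).

Definition transversal_at (g h : pt -> R) (p : pt) : Prop :=
  exists u v, grad_at g p u /\ grad_at h p v /\
    fst u * snd v - snd u * fst v <> 0.

Definition is_3web (U : pt -> Prop) (g1 g2 g3 : pt -> R) : Prop :=
  open2 U /\ forall p, U p ->
    transversal_at g1 g2 p /\ transversal_at g1 g3 p /\ transversal_at g2 g3 p.

Definition diffeo (V W : pt -> Prop) (phi psi : pt -> pt) : Prop :=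
  open2 V /\ open2 W /\
  (forall q, V q -> W (phi q)) /\ (forall r, W r -> V (psi r)) /\
  (forall q, V q -> psi (phi q) = q) /\ (forall r, W r -> phi (psi r) = r) /\
  smooth2 V (fun q => fst (phi q)) /\ smooth2 V (fun q => snd (phi q)) /\
  smooth2 W (fun r => fst (psi r)) /\ smooth2 W (fun r => snd (psi r)).

Definition leaves_to_lines (V : pt -> Prop) (phi : pt -> pt) (g : pt -> R) : Prop :=
  forall c : R, exists A B C : R, (A <> 0 \/ B <> 0) /\
    forall q, V q -> g q = c -> A * fst (phi q) + B * snd (phi q) = C.

Definition fab (a b : R -> R) (p : pt) : R := a (fst p) * fst p + b (fst p) * snd p.

(* Main.v *)
Require Import Defs.
From Stdlib Require Import Reals Lra Lia Psatz ClassicalEpsilon Classical.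
Open Scope R_scope.

Inductive ex : Type :=
| Cst : R -> ex | VX : ex | VY : ex
| Add : ex -> ex -> ex | Mul : ex -> ex -> ex | Inv : ex -> ex
| Atm : nat -> nat -> ex.

Record AS := mkAS { at_ : nat -> nat -> pt -> R; dXa : nat -> nat -> ex; dYa : nat -> nat -> ex }.

Fixpoint ev (A:AS) (e:ex) (q:pt) : R :=
 match e with Cst c => c | VX => fst q | VY => snd q
 | Add e1 e2 => ev A e1 q + ev A e2 q | Mul e1 e2 => ev A e1 q * ev A e2 q
 | Inv e1 => / ev A e1 q | Atm i k => at_ A i k q end.

Fixpoint dX (A:AS) (e:ex) : ex := match e with
 | Cst _ => Cst 0 | VX => Cst 1 | VY => Cst 0
 | Add e1 e2 => Add (dX A e1) (dX A e2)
 | Mul e1 e2 => Add (Mul (dX A e1) e2) (Mul e1 (dX A e2))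
 | Inv e1 => Mul (Mul (Cst (-1)) (dX A e1)) (Mul (Inv e1) (Inv e1))
 | Atm i k => dXa A i k end.

Fixpoint dY (A:AS) (e:ex) : ex := match e with
 | Cst _ => Cst 0 | VX => Cst 0 | VY => Cst 1
 | Add e1 e2 => Add (dY A e1) (dY A e2)
 | Mul e1 e2 => Add (Mul (dY A e1) e2) (Mul e1 (dY A e2))
 | Inv e1 => Mul (Mul (Cst (-1)) (dY A e1)) (Mul (Inv e1) (Inv e1))
 | Atm i k => dYa A i k end.

Fixpoint okp (A:AS) (e:ex) (q:pt) : Prop := match e with
 | Add e1 e2 => okp A e1 q /\ okp A e2 q
 | Mul e1 e2 => okp A e1 q /\ okp A e2 q
 | Inv e1 => ev A e1 q <> 0 /\ okp A e1 q
 | _ => True end.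

Lemma dlim_eq f x l l' : derivable_pt_lim f x l -> l = l' -> derivable_pt_lim f x l'.
Proof. intros H ->; exact H. Qed.

Lemma dlim_loc f g x l d : derivable_pt_lim f x l -> 0 < d ->
  (forall t, Rabs (t - x) < d -> f t = g t) -> derivable_pt_lim g x l.
Proof.
  intros H Hd E eps Heps. destruct (H eps Heps) as [del Hdel].
  assert (Hm : 0 < Rmin del d) by (apply Rmin_pos; [apply cond_pos|lra]).
  exists (mkposreal _ Hm). intros h Hh Hh'. simpl in Hh'.
  rewrite <- (E (x+h)), <- (E x).
  - apply Hdel; auto. apply Rlt_le_trans with (1:=Hh'), Rmin_l.
  - rewrite Rminus_diag, Rabs_R0; lra.
  - replace (x+h-x) with h by ring. apply Rlt_le_trans with (1:=Hh'), Rmin_r.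
Qed.

Lemma dlim_inv f x l : derivable_pt_lim f x l -> f x <> 0 ->
  derivable_pt_lim (fun t => / f t) x (-1 * l * (/ f x * / f x)).
Proof.
  intros H Hn. apply dlim_loc with (f := (fct_cte 1 / f)%F) (d := 1); [| lra |].
  - eapply dlim_eq.
    + apply derivable_pt_lim_div; [apply derivable_pt_lim_const | exact H | exact Hn].
    + unfold fct_cte, Rsqr; field; auto.
  - intros t _. unfold div_fct, fct_cte. unfold Rdiv; ring.
Qed.

Lemma okp_dX A e q : okp A e q -> (forall i k, okp A (dXa A i k) q) -> okp A (dX A e) q.
Proof. intros H Ha; induction e; simpl in *; try tauto; apply Ha. Qed.
Lemma okp_dY A e q : okp A e q -> (forall i k, okp A (dYa A i k) q) -> okp A (dY A e) q.
Proof. intros H Ha; induction e; simpl in *; try tauto; apply Ha. Qed.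

Lemma deriv_x A e x y : (forall i k, partial_x (at_ A i k) (x,y) (ev A (dXa A i k) (x,y))) ->
  okp A e (x,y) -> partial_x (ev A e) (x,y) (ev A (dX A e) (x,y)).
Proof.
  intros Ha; unfold partial_x in *; simpl in *; induction e; simpl; intro Ho.
  - apply derivable_pt_lim_const.
  - apply derivable_pt_lim_id.
  - apply derivable_pt_lim_const.
  - destruct Ho. apply (derivable_pt_lim_plus (fun t => ev A e1 (t,y)) (fun t => ev A e2 (t,y))); auto.
  - destruct Ho. apply (derivable_pt_lim_mult (fun t => ev A e1 (t,y)) (fun t => ev A e2 (t,y))); auto.
  - destruct Ho as [Hn Ho].
    apply (dlim_inv (fun t => ev A e (t,y))); auto.
  - apply Ha.
Qed.

Lemma deriv_y A e x y : (forall i k, partial_y (at_ A i k) (x,y) (ev A (dYa A i k) (x,y))) ->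
  okp A e (x,y) -> partial_y (ev A e) (x,y) (ev A (dY A e) (x,y)).
Proof.
  intros Ha; unfold partial_y in *; simpl in *; induction e; simpl; intro Ho.
  - apply derivable_pt_lim_const.
  - apply derivable_pt_lim_const.
  - apply derivable_pt_lim_id.
  - destruct Ho. apply (derivable_pt_lim_plus (fun t => ev A e1 (x,t)) (fun t => ev A e2 (x,t))); auto.
  - destruct Ho. apply (derivable_pt_lim_mult (fun t => ev A e1 (x,t)) (fun t => ev A e2 (x,t))); auto.
  - destruct Ho as [Hn Ho].
    apply (dlim_inv (fun t => ev A e (x,t))); auto.
  - apply Ha.
Qed.

Lemma cont_cst c p : cont2_at (fun _ => c) p.
Proof. intros e He; exists 1; split; [lra|]; intros; rewrite Rminus_diag, Rabs_R0; lra. Qed.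
Lemma cont_fst p : cont2_at fst p.
Proof. intros e He; exists e; split; auto. Qed.
Lemma cont_snd p : cont2_at snd p.
Proof. intros e He; exists e; split; auto. Qed.

Lemma cont_both f g p e1 e2 : cont2_at f p -> cont2_at g p -> 0 < e1 -> 0 < e2 ->
  exists d, 0 < d /\ forall q, Rabs (fst q - fst p) < d -> Rabs (snd q - snd p) < d ->
   Rabs (f q - f p) < e1 /\ Rabs (g q - g p) < e2.
Proof.
  intros Hf Hg H1 H2. destruct (Hf e1 H1) as [d1 [Hd1 P1]]. destruct (Hg e2 H2) as [d2 [Hd2 P2]].
  exists (Rmin d1 d2); split; [apply Rmin_pos; auto|]. intros q Hx Hy.
  split; [apply P1|apply P2]; eapply Rlt_le_trans; eauto; try apply Rmin_l; apply Rmin_r.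
Qed.

Lemma cont_add f g p : cont2_at f p -> cont2_at g p -> cont2_at (fun q => f q + g q) p.
Proof.
  intros Hf Hg e He. destruct (cont_both f g p (e/2) (e/2) Hf Hg) as [d [Hd P]]; try lra.
  exists d; split; auto. intros q Hx Hy. destruct (P q Hx Hy) as [A B].
  replace (f q + g q - (f p + g p)) with ((f q - f p) + (g q - g p)) by ring.
  eapply Rle_lt_trans; [apply Rabs_triang|]. lra.
Qed.

Lemma cont_mul f g p : cont2_at f p -> cont2_at g p -> cont2_at (fun q => f q * g q) p.
Proof.
  intros Hf Hg e He.
  set (M1 := Rabs (f p) + 1). set (M2 := Rabs (g p) + 1).
  assert (HM1 : 0 < M1) by (unfold M1; pose proof (Rabs_pos (f p)); lra).
  assert (HM2 : 0 < M2) by (unfold M2; pose proof (Rabs_pos (g p)); lra).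
  destruct (cont_both f g p (e/(2*M2)) (Rmin 1 (e/(2*M1))) Hf Hg) as [d [Hd P]].
  { apply Rdiv_lt_0_compat; lra. } { apply Rmin_pos; [lra|apply Rdiv_lt_0_compat; lra]. }
  exists d; split; auto. intros q Hx Hy. destruct (P q Hx Hy) as [A B].
  pose proof (Rmin_l 1 (e/(2*M1))). pose proof (Rmin_r 1 (e/(2*M1))).
  replace (f q * g q - f p * g p) with ((f q - f p) * g q + f p * (g q - g p)) by ring.
  eapply Rle_lt_trans; [apply Rabs_triang|]. rewrite !Rabs_mult.
  assert (Hg1 : Rabs (g q) <= M2).
  { unfold M2. replace (g q) with (g p + (g q - g p)) by ring.
    eapply Rle_trans; [apply Rabs_triang|]. lra. }
  assert (T1 : Rabs (f q - f p) * Rabs (g q) <= e/(2*M2) * M2).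
  { apply Rmult_le_compat; try apply Rabs_pos; lra. }
  assert (T2 : Rabs (f p) * Rabs (g q - g p) < M1 * (e/(2*M1))).
  { apply Rle_lt_trans with (M1 * Rabs (g q - g p)).
    - apply Rmult_le_compat_r; [apply Rabs_pos|unfold M1; lra].
    - apply Rmult_lt_compat_l; lra. }
  assert (E1 : e/(2*M2)*M2 = e/2) by (field; lra).
  assert (E2 : M1*(e/(2*M1)) = e/2) by (field; lra).
  lra.
Qed.

Lemma cont_inv g p : cont2_at g p -> g p <> 0 -> cont2_at (fun q => / g q) p.
Proof.
  intros Hg Hn e He.
  assert (Ha : 0 < Rabs (g p)) by (apply Rabs_pos_lt; auto).
  destruct (Hg (Rmin (Rabs (g p)/2) (e * Rabs (g p) * Rabs (g p) / 2))) as [d [Hd P]].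
  { apply Rmin_pos; [lra|]. apply Rdiv_lt_0_compat; [|lra]. apply Rmult_lt_0_compat; [apply Rmult_lt_0_compat|]; lra. }
  exists d; split; auto. intros q Hx Hy. specialize (P q Hx Hy).
  pose proof (Rmin_l (Rabs (g p)/2) (e * Rabs (g p) * Rabs (g p) / 2)) as M1.
  pose proof (Rmin_r (Rabs (g p)/2) (e * Rabs (g p) * Rabs (g p) / 2)) as M2.
  assert (Hq : Rabs (g p) / 2 <= Rabs (g q)).
  { pose proof (Rabs_triang_inv (g p) (g q)). rewrite <- Rabs_Ropp in P.
    replace (- (g q - g p)) with (g p - g q) in P by ring. lra. }
  assert (Hq0 : g q <> 0) by (intro Z; rewrite Z, Rabs_R0 in Hq; lra).
  replace (/ g q - / g p) with ((g p - g q) * / g q * / g p) by (field; auto).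
  rewrite !Rabs_mult, !Rabs_inv, <- Rabs_Ropp. replace (- (g p - g q)) with (g q - g p) by ring.
  set (D := Rabs (g q - g p)) in *.
  assert (S1 : D * / Rabs (g q) <= D * / (Rabs (g p)/2)).
  { apply Rmult_le_compat_l; [apply Rabs_pos|]. apply Rinv_le_contravar; lra. }
  assert (S2 : D * / (Rabs (g p)/2) < (e * Rabs (g p) * Rabs (g p) / 2) * / (Rabs (g p)/2)).
  { apply Rmult_lt_compat_r; [apply Rinv_0_lt_compat; lra| lra]. }
  assert (S3 : D * / Rabs (g q) * / Rabs (g p) < (e * Rabs (g p) * Rabs (g p) / 2) * / (Rabs (g p)/2) * / Rabs (g p)).
  { apply Rmult_lt_compat_r; [apply Rinv_0_lt_compat; lra| lra]. }
  replace ((e * Rabs (g p) * Rabs (g p) / 2) * / (Rabs (g p)/2) * / Rabs (g p)) with e in S3 by (field; lra). exact S3.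
Qed.

Lemma cpt_elim f x0 : continuity_pt f x0 -> forall eps, 0 < eps -> exists d, 0 < d /\
  forall x, Rabs (x - x0) < d -> Rabs (f x - f x0) < eps.
Proof.
  intros H eps He. destruct (H eps He) as [d [Hd P]]. exists d; split; auto.
  intros x Hx. destruct (Req_dec x x0) as [->|Hne].
  - rewrite Rminus_diag, Rabs_R0; auto.
  - apply (P x). split; [split; [exact I| auto]| exact Hx].
Qed.

Lemma cont_comp1 f h p : continuity_pt f (h p) -> cont2_at h p -> cont2_at (fun q => f (h q)) p.
Proof.
  intros Hf Hh e He. destruct (cpt_elim f (h p) Hf e He) as [d1 [Hd1 P1]].
  destruct (Hh d1 Hd1) as [d [Hd P]]. exists d; split; auto.
Qed.

Definition goodAS (A:AS) (S: pt->Prop) : Prop :=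
 open2 S /\
 (forall i k q, S q -> partial_x (at_ A i k) q (ev A (dXa A i k) q)) /\
 (forall i k q, S q -> partial_y (at_ A i k) q (ev A (dYa A i k) q)) /\
 (forall i k q, S q -> cont2_at (at_ A i k) q) /\
 (forall i k q, S q -> okp A (dXa A i k) q /\ okp A (dYa A i k) q) /\
 (forall i k q, S q -> ev A (dY A (dXa A i k)) q = ev A (dX A (dYa A i k)) q).

Lemma ev_cont A e q : (forall i k, cont2_at (at_ A i k) q) -> okp A e q -> cont2_at (ev A e) q.
Proof.
  intros Ha; induction e; simpl; intro Ho.
  - apply cont_cst.
  - apply cont_fst.
  - apply cont_snd.
  - destruct Ho; apply (cont_add (ev A e1) (ev A e2)); auto.
  - destruct Ho; apply (cont_mul (ev A e1) (ev A e2)); auto.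
  - destruct Ho; apply (cont_inv (ev A e)); auto.
  - apply Ha.
Qed.

Lemma comm_ev A e q : (forall i k, ev A (dY A (dXa A i k)) q = ev A (dX A (dYa A i k)) q) ->
  ev A (dY A (dX A e)) q = ev A (dX A (dY A e)) q.
Proof.
  intros Ha; induction e; simpl; try rewrite IHe1, IHe2; try rewrite IHe; try ring. apply Ha.
Qed.

Definition okS A (S : pt -> Prop) e := forall q, S q -> okp A e q.

Lemma okS_dX A S e : goodAS A S -> okS A S e -> okS A S (dX A e).
Proof. intros G H q Hq. apply okp_dX; auto. intros i k; apply G; auto. Qed.
Lemma okS_dY A S e : goodAS A S -> okS A S e -> okS A S (dY A e).
Proof. intros G H q Hq. apply okp_dY; auto. intros i k; apply G; auto. Qed.
Lemma okS_iX A S e i : goodAS A S -> okS A S e -> okS A S (Nat.iter i (dX A) e).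
Proof. intros G H; induction i; simpl; auto; apply okS_dX; auto. Qed.
Lemma okS_iY A S e i : goodAS A S -> okS A S e -> okS A S (Nat.iter i (dY A) e).
Proof. intros G H; induction i; simpl; auto; apply okS_dY; auto. Qed.

Lemma congr_x A S e1 e2 : goodAS A S -> okS A S e1 -> okS A S e2 ->
  (forall q, S q -> ev A e1 q = ev A e2 q) -> forall q, S q -> ev A (dX A e1) q = ev A (dX A e2) q.
Proof.
  intros G O1 O2 E [x y] Hq. destruct G as [Op [Hx [Hy [Hc [Ho Hm]]]]].
  pose proof (deriv_x A e1 x y (fun i k => Hx i k _ Hq) (O1 _ Hq)) as D1.
  pose proof (deriv_x A e2 x y (fun i k => Hx i k _ Hq) (O2 _ Hq)) as D2.
  destruct (Op _ Hq) as [d [Hd Pd]]. unfold partial_x in *; simpl in *.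
  apply (uniqueness_limite (fun t => ev A e2 (t,y)) x); auto.
  apply dlim_loc with (2 := Hd) (1 := D1). intros t Ht. apply E, Pd; simpl; auto.
  rewrite Rminus_diag, Rabs_R0; lra.
Qed.

Lemma congr_y A S e1 e2 : goodAS A S -> okS A S e1 -> okS A S e2 ->
  (forall q, S q -> ev A e1 q = ev A e2 q) -> forall q, S q -> ev A (dY A e1) q = ev A (dY A e2) q.
Proof.
  intros G O1 O2 E [x y] Hq. destruct G as [Op [Hx [Hy [Hc [Ho Hm]]]]].
  pose proof (deriv_y A e1 x y (fun i k => Hy i k _ Hq) (O1 _ Hq)) as D1.
  pose proof (deriv_y A e2 x y (fun i k => Hy i k _ Hq) (O2 _ Hq)) as D2.
  destruct (Op _ Hq) as [d [Hd Pd]]. unfold partial_y in *; simpl in *.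
  apply (uniqueness_limite (fun t => ev A e2 (x,t)) y); auto.
  apply dlim_loc with (2 := Hd) (1 := D1). intros t Ht. apply E, Pd; simpl; auto.
  rewrite Rminus_diag, Rabs_R0; lra.
Qed.

Lemma xY A S e : goodAS A S -> okS A S e -> forall j q, S q ->
  ev A (dX A (Nat.iter j (dY A) e)) q = ev A (Nat.iter j (dY A) (dX A e)) q.
Proof.
  intros G O j. induction j; intros q Hq; simpl; auto.
  rewrite <- comm_ev by (intros; apply G; auto).
  apply (congr_y A S); auto.
  - apply okS_dX; auto. apply okS_iY; auto.
  - apply okS_iY; auto. apply okS_dX; auto.
Qed.

Lemma smooth_ev A S e : goodAS A S -> okS A S e -> smooth2 S (ev A e).
Proof.
  intros G O. exists (fun i j => ev A (Nat.iter j (dY A) (Nat.iter i (dX A) e))).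
  split; [intros; reflexivity|]. intros i j [x y] Hq.
  assert (Oij : okS A S (Nat.iter j (dY A) (Nat.iter i (dX A) e))) by (apply okS_iY; auto; apply okS_iX; auto).
  split; [|split].
  - pose proof (deriv_x A _ x y (fun i k => proj1 (proj2 G) i k _ Hq) (Oij _ Hq)) as D.
    unfold partial_x in *; simpl in *. eapply dlim_eq; [exact D|].
    apply (xY A S); auto. apply okS_iX; auto.
  - exact (deriv_y A _ x y (fun i k => proj1 (proj2 (proj2 G)) i k _ Hq) (Oij _ Hq)).
  - apply ev_cont; auto. intros; apply G; auto.
Qed.

Lemma ev_cont_S A S e q : goodAS A S -> okS A S e -> S q -> cont2_at (ev A e) q.
Proof. intros G O Hq. apply ev_cont; auto. intros; apply G; auto. Qed.

Lemma smooth2_sub S T g : smooth2 S g -> (forall q, T q -> S q) -> smooth2 T g.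
Proof. intros [D [H0 H]] Hs. exists D; split; auto. Qed.

Definition Ae (K : R) := Add (Mul (Atm 0 0) (Atm 2 0)) (Cst K).
Definition Qe := Add (Mul (Add (Mul (Atm 0 1) (Atm 2 0)) (Atm 0 0)) VX) (Mul (Atm 1 1) VY).
Definition GX K := Mul (Mul (Cst (-1)) (Ae K)) (Inv Qe).
Definition GY := Mul (Mul (Cst (-1)) (Atm 1 0)) (Inv Qe).

Definition Aps (Da Db : nat -> R -> R) (K : R) (g : pt -> R) : AS :=
  mkAS (fun i k q => match i with O => Da k (g q) | 1%nat => Db k (g q) | _ => g q end)
       (fun i k => match i with O => Mul (Atm 0 (S k)) (GX K) | 1%nat => Mul (Atm 1 (S k)) (GX K) | _ => GX K end)
       (fun i k => match i with O => Mul (Atm 0 (S k)) GY | 1%nat => Mul (Atm 1 (S k)) GY | _ => GY end).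

Lemma comm_g Da Db K g q : ev (Aps Da Db K g) Qe q <> 0 ->
  ev (Aps Da Db K g) (dY (Aps Da Db K g) (GX K)) q = ev (Aps Da Db K g) (dX (Aps Da Db K g) GY) q.
Proof.
  intro Hn. simpl in *. field. exact Hn.
Qed.

Definition tw (D : nat -> R -> R) := forall n x, derivable_pt_lim (D n) x (D (S n) x).

Lemma tw_cont D k x : tw D -> continuity_pt (D k) x.
Proof. intro T. apply derivable_continuous_pt. exact (exist _ _ (T k x)). Qed.

Lemma good_Aps Da Db K g (W : pt -> Prop) : tw Da -> tw Db -> open2 W ->
  (forall q, W q -> partial_x g q (ev (Aps Da Db K g) (GX K) q)) ->
  (forall q, W q -> partial_y g q (ev (Aps Da Db K g) GY q)) ->
  (forall q, W q -> cont2_at g q) ->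
  (forall q, W q -> ev (Aps Da Db K g) Qe q <> 0) ->
  goodAS (Aps Da Db K g) W.
Proof.
  intros Ta Tb Op Px Py Cg Qn. split; [exact Op|]. split; [|split; [|split; [|split]]].
  - intros i k [x y] Hq. specialize (Px _ Hq). unfold partial_x in *.
    destruct i as [|[|i]]; simpl; try exact Px.
    + apply (derivable_pt_lim_comp (fun t => g (t, y)) (Da k)); auto.
    + apply (derivable_pt_lim_comp (fun t => g (t, y)) (Db k)); auto.
  - intros i k [x y] Hq. specialize (Py _ Hq). unfold partial_y in *.
    destruct i as [|[|i]]; simpl; try exact Py.
    + apply (derivable_pt_lim_comp (fun t => g (x, t)) (Da k)); auto.
    + apply (derivable_pt_lim_comp (fun t => g (x, t)) (Db k)); auto.
  - intros i k q Hq. destruct i as [|[|i]]; simpl; auto.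
    + apply (cont_comp1 (Da k) g); auto. apply tw_cont; auto.
    + apply (cont_comp1 (Db k) g); auto. apply tw_cont; auto.
  - intros i k q Hq. pose proof (Qn q Hq). destruct i as [|[|i]]; simpl in *; tauto.
  - intros i k q Hq. pose proof (comm_g Da Db K g q (Qn q Hq)) as C.
    destruct i as [|[|i]]; try exact C; simpl dXa; simpl dYa;
    change (dY (Aps Da Db K g) (Mul ?a ?b)) with (Add (Mul (dY (Aps Da Db K g) a) b) (Mul a (dY (Aps Da Db K g) b)));
    change (dX (Aps Da Db K g) (Mul ?a ?b)) with (Add (Mul (dX (Aps Da Db K g) a) b) (Mul a (dX (Aps Da Db K g) b)));
    change (ev ?A (Add ?a ?b) ?q) with (ev A a q + ev A b q);
    change (ev ?A (Mul ?a ?b) ?q) with (ev A a q * ev A b q);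
    rewrite C; simpl; ring.
Qed.

Definition Ap (Da Db : nat -> R -> R) : AS :=
  mkAS (fun i k q => match i with O => Da k (fst q) | _ => Db k (fst q) end)
       (fun i k => Atm i (S k)) (fun _ _ => Cst 0).

Lemma good_Ap Da Db (S : pt -> Prop) : tw Da -> tw Db -> open2 S -> goodAS (Ap Da Db) S.
Proof.
  intros Ta Tb Op. split; [exact Op|]. split; [|split; [|split; [|split]]].
  - intros i k [x y] Hq. unfold partial_x; destruct i; simpl; auto.
  - intros i k [x y] Hq. unfold partial_y; destruct i; simpl; apply derivable_pt_lim_const.
  - intros i k q Hq. destruct i; simpl.
    + apply (cont_comp1 (Da k) fst); [apply tw_cont; auto| apply cont_fst].
    + apply (cont_comp1 (Db k) fst); [apply tw_cont; auto| apply cont_fst].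
  - intros; simpl; tauto.
  - intros; simpl; reflexivity.
Qed.

Definition Hf (Da Db : nat -> R -> R) K t X Y := (Da O t * t + K) * X + Db O t * Y + -1.
Definition Hq (Da Db : nat -> R -> R) t X Y := (Da 1%nat t * t + Da O t) * X + Db 1%nat t * Y.

Lemma open_all : open2 (fun _ => True).
Proof. intros p _; exists 1; split; auto; lra. Qed.

Lemma H_deriv Da Db K X Y t : tw Da -> tw Db ->
  derivable_pt_lim (fun t => Hf Da Db K t X Y) t (Hq Da Db t X Y).
Proof.
  intros Ta Tb.
  pose (HE := Add (Add (Mul (Add (Mul (Atm 0 0) VX) (Cst K)) (Cst X)) (Mul (Atm 1 0) (Cst Y))) (Cst (-1))).
  assert (G := good_Ap Da Db _ Ta Tb open_all).
  pose proof (deriv_x (Ap Da Db) HE t 0 (fun i k => proj1 (proj2 G) i k _ I)) as D.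
  unfold partial_x in D; simpl in D. unfold Hf.
  eapply dlim_eq; [apply D; tauto| unfold Hq; ring].
Qed.

Lemma H_contin Da Db K X Y : tw Da -> tw Db -> continuity (fun t => Hf Da Db K t X Y).
Proof.
  intros Ta Tb t. apply derivable_continuous_pt. exact (exist _ _ (H_deriv Da Db K X Y t Ta Tb)).
Qed.

Lemma H_mvt Da Db K X Y s t : tw Da -> tw Db -> exists xi, Rmin s t <= xi <= Rmax s t /\
  Hf Da Db K s X Y - Hf Da Db K t X Y = Hq Da Db xi X Y * (s - t).
Proof.
  intros Ta Tb. destruct (Rtotal_order s t) as [Hl|[He|Hg]].
  - destruct (MVT_cor2 (fun t => Hf Da Db K t X Y) (fun t => Hq Da Db t X Y) s t Hl) as [c [Hc Hc']].
    { intros; apply H_deriv; auto. }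
    exists c. rewrite Rmin_left, Rmax_right by lra. split; [lra|]. 
    replace (Hf Da Db K s X Y - Hf Da Db K t X Y) with (- (Hf Da Db K t X Y - Hf Da Db K s X Y)) by ring.
    rewrite Hc; ring.
  - subst. exists t. rewrite Rmin_left, Rmax_left by lra. split; [lra| ring].
  - destruct (MVT_cor2 (fun t => Hf Da Db K t X Y) (fun t => Hq Da Db t X Y) t s Hg) as [c [Hc Hc']].
    { intros; apply H_deriv; auto. }
    exists c. rewrite Rmin_right, Rmax_left by lra. split; [lra|]. exact Hc.
Qed.

Lemma Hq_cont Da Db t1 X1 Y1 eps : tw Da -> tw Db -> 0 < eps -> exists d, 0 < d /\
  forall t X Y, Rabs (t - t1) < d -> Rabs (X - X1) < d -> Rabs (Y - Y1) < d ->
   Rabs (Hq Da Db t X Y - Hq Da Db t1 X1 Y1) < eps.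
Proof.
  intros Ta Tb He.
  assert (G := good_Ap Da Db _ Ta Tb open_all).
  pose (E1 := Mul (Add (Mul (Atm 0 1) VX) (Atm 0 0)) VY).
  pose (E2 := Mul (Atm 1 1) VY).
  assert (C1 : cont2_at (ev (Ap Da Db) E1) (t1, X1)) by (apply (ev_cont_S _ (fun _ => True)); auto; intros q _; simpl; tauto).
  assert (C2 : cont2_at (ev (Ap Da Db) E2) (t1, Y1)) by (apply (ev_cont_S _ (fun _ => True)); auto; intros q _; simpl; tauto).
  destruct (C1 (eps/2)) as [d1 [Hd1 P1]]; [lra|]. destruct (C2 (eps/2)) as [d2 [Hd2 P2]]; [lra|].
  exists (Rmin d1 d2); split; [apply Rmin_pos; auto|]. intros t X Y Ht HX HY.
  pose proof (Rmin_l d1 d2); pose proof (Rmin_r d1 d2).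
  specialize (P1 (t, X)); specialize (P2 (t, Y)); simpl in P1, P2.
  assert (A1 := P1 ltac:(lra) ltac:(lra)). assert (A2 := P2 ltac:(lra) ltac:(lra)).
  unfold Hq.
  replace ((Da 1%nat t * t + Da 0%nat t) * X + Db 1%nat t * Y - ((Da 1%nat t1 * t1 + Da 0%nat t1) * X1 + Db 1%nat t1 * Y1))
    with (((Da 1%nat t * t + Da 0%nat t) * X - (Da 1%nat t1 * t1 + Da 0%nat t1) * X1) + (Db 1%nat t * Y - Db 1%nat t1 * Y1)) by ring.
  eapply Rle_lt_trans; [apply Rabs_triang|]. lra.
Qed.

Lemma impl_deriv (v : R -> R) (x1 t1 c q0 d0 : R) (P : R -> R -> R) :
  0 < q0 -> 0 < d0 -> v x1 = t1 ->
  (forall eta, 0 < eta -> exists d, 0 < d /\ forall xi h, Rabs (xi - t1) < d -> Rabs h < d ->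
     Rabs (P xi h - P t1 0) < eta) ->
  (forall h, Rabs h < d0 -> exists xi, Rabs (xi - t1) <= Rabs (v (x1+h) - t1) /\
     q0 < Rabs (P xi h) /\ P xi h * (v (x1+h) - t1) + c * h = 0) ->
  q0 < Rabs (P t1 0) ->
  derivable_pt_lim v x1 (- c / P t1 0).
Proof.
  intros Hq0 Hd0 Hv PC Rel HP0 eps Heps.
  set (C := Rabs c + 1). assert (HC : 0 < C) by (unfold C; pose proof (Rabs_pos c); lra).
  destruct (PC (eps * q0 * q0 / C)) as [d [Hd Pd]].
  { apply Rdiv_lt_0_compat; auto. repeat apply Rmult_lt_0_compat; auto. }
  assert (Hm : 0 < Rmin d0 (Rmin d (d * q0 / C))).
  { repeat apply Rmin_pos; auto. apply Rdiv_lt_0_compat; auto. apply Rmult_lt_0_compat; auto. }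
  exists (mkposreal _ Hm). intros h Hh0 Hh. simpl in Hh.
  pose proof (Rmin_l d0 (Rmin d (d * q0 / C))). pose proof (Rmin_r d0 (Rmin d (d * q0 / C))).
  pose proof (Rmin_l d (d * q0 / C)). pose proof (Rmin_r d (d * q0 / C)).
  destruct (Rel h ltac:(lra)) as [xi [Hxi [HPx HR]]].
  assert (HPn : P xi h <> 0) by (intro Z; rewrite Z, Rabs_R0 in HPx; lra).
  assert (HP0n : P t1 0 <> 0) by (intro Z; rewrite Z, Rabs_R0 in HP0; lra).
  assert (Ev : v (x1 + h) - t1 = - c * h / P xi h) by (field_simplify_eq; auto; lra).
  rewrite Hv, Ev.
  assert (Bxi : Rabs (xi - t1) < d).
  { eapply Rle_lt_trans; [exact Hxi|]. rewrite Ev.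
    unfold Rdiv; rewrite !Rabs_mult, Rabs_Ropp, Rabs_inv.
    apply Rle_lt_trans with (Rabs c * Rabs h * / q0).
    - apply Rmult_le_compat_l; [apply Rmult_le_pos; apply Rabs_pos|]. apply Rinv_le_contravar; lra.
    - apply Rle_lt_trans with (C * Rabs h * / q0).
      + apply Rmult_le_compat_r; [left; apply Rinv_0_lt_compat; auto|]. apply Rmult_le_compat_r; [apply Rabs_pos|]. unfold C; lra.
      + apply Rlt_le_trans with (C * (d * q0 / C) * / q0).
        * apply Rmult_lt_compat_r; [apply Rinv_0_lt_compat; auto|]. apply Rmult_lt_compat_l; lra.
        * right; field; lra. }
  specialize (Pd xi h Bxi ltac:(lra)).
  replace (- c * h / P xi h / h - - c / P t1 0) with (c * (P xi h - P t1 0) * / P xi h * / P t1 0) by (field; auto).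
  rewrite !Rabs_mult, !Rabs_inv.
  apply Rle_lt_trans with (Rabs c * Rabs (P xi h - P t1 0) * / q0 * / q0).
  - apply Rmult_le_compat; try (left; apply Rinv_0_lt_compat; apply Rabs_pos_lt; auto).
    + apply Rmult_le_pos; [apply Rmult_le_pos; apply Rabs_pos| left; apply Rinv_0_lt_compat; apply Rabs_pos_lt; auto].
    + apply Rmult_le_compat_l; [apply Rmult_le_pos; apply Rabs_pos|]. apply Rinv_le_contravar; lra.
    + apply Rinv_le_contravar; lra.
  - apply Rle_lt_trans with (C * Rabs (P xi h - P t1 0) * / q0 * / q0).
    + repeat apply Rmult_le_compat_r; try (left; apply Rinv_0_lt_compat; auto). apply Rabs_pos. unfold C; lra.
    + apply Rlt_le_trans with (C * (eps * q0 * q0 / C) * / q0 * / q0).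
      * repeat apply Rmult_lt_compat_r; try apply Rinv_0_lt_compat; auto. apply Rmult_lt_compat_l; auto.
      * right; field; lra.
Qed.

Lemma sign_lem h Q0 : Rabs (h - Q0) < Rabs Q0 / 2 -> Rabs Q0 / 2 < Rabs h /\ Q0 * Q0 / 2 < Q0 * h.
Proof. intros H. split_Rabs; nra. Qed.

Lemma between_lem s t xi c r : Rmin s t <= xi <= Rmax s t -> Rabs (s - c) < r -> Rabs (t - c) < r ->
  Rabs (xi - c) < r /\ Rabs (xi - t) <= Rabs (s - t).
Proof. unfold Rmin, Rmax; destruct (Rle_dec s t); intros; split_Rabs; lra. Qed.

Definition box (c1 c2 d : R) (q : pt) := Rabs (fst q - c1) < d /\ Rabs (snd q - c2) < d.

Lemma box_nbhd (c1 c2 d : R) (h1 h2 : pt -> R) q : cont2_at h1 q -> cont2_at h2 q ->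
  Rabs (h1 q - c1) < d -> Rabs (h2 q - c2) < d -> exists e, 0 < e /\ forall q',
  Rabs (fst q' - fst q) < e -> Rabs (snd q' - snd q) < e -> Rabs (h1 q' - c1) < d /\ Rabs (h2 q' - c2) < d.
Proof.
  intros C1 C2 B1 B2. destruct (cont_both h1 h2 q (d - Rabs (h1 q - c1)) (d - Rabs (h2 q - c2)) C1 C2) as [e [He P]]; try lra.
  exists e; split; auto. intros q' H1 H2. destruct (P q' H1 H2) as [P1 P2].
  split.
  - replace (h1 q' - c1) with ((h1 q' - h1 q) + (h1 q - c1)) by ring. eapply Rle_lt_trans; [apply Rabs_triang|]. lra.
  - replace (h2 q' - c2) with ((h2 q' - h2 q) + (h2 q - c2)) by ring. eapply Rle_lt_trans; [apply Rabs_triang|]. lra.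
Qed.

Lemma box_in c1 c2 d q : box c1 c2 d q -> exists e, 0 < e /\ forall q',
  Rabs (fst q' - fst q) < e -> Rabs (snd q' - snd q) < e -> box c1 c2 d q'.
Proof. intros [B1 B2]. apply (box_nbhd c1 c2 d fst snd q (cont_fst q) (cont_snd q) B1 B2). Qed.

Lemma open_box c1 c2 d : open2 (box c1 c2 d).
Proof. intros q Hq. apply box_in; auto. Qed.

Lemma Hf_diff Da Db K t X Y X1 Y1 :
  Hf Da Db K t X Y - Hf Da Db K t X1 Y1 = (Da O t * t + K) * (X - X1) + Db O t * (Y - Y1).
Proof. unfold Hf; ring. Qed.

Lemma pert_bound A B X Y X1 Y1 d : Rabs (X - X1) < d -> Rabs (Y - Y1) < d ->
  Rabs (A * (X - X1) + B * (Y - Y1)) <= (Rabs A + Rabs B) * d.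
Proof.
  intros H1 H2. eapply Rle_trans; [apply Rabs_triang|]. rewrite !Rabs_mult.
  pose proof (Rabs_pos A); pose proof (Rabs_pos B). nra.
Qed.

Lemma implicit_fn Da Db K x0 y0 r :
  tw Da -> tw Db -> 0 < r -> r <= 1/2 ->
  Hq Da Db x0 1 y0 <> 0 -> Hf Da Db K x0 1 y0 = 0 ->
  (forall t X Y, Rabs (t-x0) < r -> Rabs (X-1) < r -> Rabs (Y-y0) < r ->
     Rabs (Hq Da Db t X Y - Hq Da Db x0 1 y0) < Rabs (Hq Da Db x0 1 y0) / 2) ->
  exists d (g : pt -> R), 0 < d /\ d <= r /\ 2 * d * (1 + Rabs y0) < r /\
   (forall q, box 1 y0 d q -> Rabs (g q - x0) < r /\ Hf Da Db K (g q) (fst q) (snd q) = 0) /\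
   (forall q, box 1 y0 d q -> partial_x g q (ev (Aps Da Db K g) (GX K) q)) /\
   (forall q, box 1 y0 d q -> partial_y g q (ev (Aps Da Db K g) GY q)) /\
   (forall q, box 1 y0 d q -> cont2_at g q) /\
   (forall q, box 1 y0 d q -> ev (Aps Da Db K g) Qe q <> 0).
Proof.
  intros Ta Tb Hr Hr2 HQ0 H0 HQ.
  set (Q0 := Hq Da Db x0 1 y0) in *. set (q0 := Rabs Q0).
  assert (Hq0 : 0 < q0) by (apply Rabs_pos_lt; auto).
  assert (Eq0 : q0 * q0 = Q0 * Q0) by (unfold q0; split_Rabs; ring).
  set (A := fun t => Da O t * t + K).
  set (tL := x0 - r/2). set (tR := x0 + r/2).
  assert (SR : Q0 * Q0 / 2 * (r/2) < Q0 * Hf Da Db K tR 1 y0).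
  { destruct (H_mvt Da Db K 1 y0 tR x0 Ta Tb) as [xi [Bx E]].
    assert (B1 : Rabs (tR - x0) < r) by (unfold tR; split_Rabs; lra).
    assert (B2 : Rabs (x0 - x0) < r) by (split_Rabs; lra).
    destruct (between_lem tR x0 xi x0 r Bx B1 B2) as [Bxi _].
    rewrite H0, Rminus_0_r in E. rewrite E.
    destruct (sign_lem (Hq Da Db xi 1 y0) Q0) as [_ S2].
    { apply HQ; auto; split_Rabs; lra. }
    unfold tR. replace (x0 + r/2 - x0) with (r/2) by ring. nra. }
  assert (SL : Q0 * Hf Da Db K tL 1 y0 < - (Q0 * Q0 / 2 * (r/2))).
  { destruct (H_mvt Da Db K 1 y0 tL x0 Ta Tb) as [xi [Bx E]].
    assert (B1 : Rabs (tL - x0) < r) by (unfold tL; split_Rabs; lra).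
    assert (B2 : Rabs (x0 - x0) < r) by (split_Rabs; lra).
    destruct (between_lem tL x0 xi x0 r Bx B1 B2) as [Bxi _].
    rewrite H0, Rminus_0_r in E. rewrite E.
    destruct (sign_lem (Hq Da Db xi 1 y0) Q0) as [_ S2].
    { apply HQ; auto; split_Rabs; lra. }
    unfold tL. replace (x0 - r/2 - x0) with (-(r/2)) by ring. nra. }
  set (M := Rabs (A tR) + Rabs (Db O tR) + Rabs (A tL) + Rabs (Db O tL) + 1).
  assert (HM : 1 <= M) by (unfold M; pose proof (Rabs_pos (A tR)); pose proof (Rabs_pos (Db O tR));
     pose proof (Rabs_pos (A tL)); pose proof (Rabs_pos (Db O tL)); lra).
  assert (Hy1 : 1 <= 1 + Rabs y0) by (pose proof (Rabs_pos y0); lra).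
  set (d := Rmin (q0 * r / (8 * M)) (r / (4 * (1 + Rabs y0)))).
  assert (Hd1 : d <= q0 * r / (8 * M)) by apply Rmin_l.
  assert (Hd2 : d <= r / (4 * (1 + Rabs y0))) by apply Rmin_r.
  assert (Hd : 0 < d) by (apply Rmin_pos; apply Rdiv_lt_0_compat; nra).
  assert (Hdr : d <= r / 4).
  { eapply Rle_trans; [exact Hd2|]. apply Rmult_le_compat_l; [lra|]. apply Rinv_le_contravar; lra. }
  assert (Hd3 : 2 * d * (1 + Rabs y0) < r).
  { apply Rle_lt_trans with (2 * (r / (4 * (1 + Rabs y0))) * (1 + Rabs y0)).
    - apply Rmult_le_compat_r; lra.
    - replace (2 * (r / (4 * (1 + Rabs y0))) * (1 + Rabs y0)) with (r/2) by (field; lra). lra. }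
  assert (Hqd : q0 * (M * d) <= Q0 * Q0 * r / 8).
  { rewrite <- Eq0. apply Rle_trans with (q0 * (M * (q0 * r / (8 * M)))).
    - apply Rmult_le_compat_l; [lra|]. apply Rmult_le_compat_l; lra.
    - right; field; lra. }
  assert (Pert : forall t X Y, box 1 y0 d (X, Y) -> Rabs (Q0 * Hf Da Db K t X Y - Q0 * Hf Da Db K t 1 y0) <= q0 * ((Rabs (A t) + Rabs (Db O t)) * d)).
  { intros t X Y [B1 B2]. simpl in B1, B2.
    replace (Q0 * Hf Da Db K t X Y - Q0 * Hf Da Db K t 1 y0) with (Q0 * (Hf Da Db K t X Y - Hf Da Db K t 1 y0)) by ring.
    rewrite Rabs_mult, Hf_diff. apply Rmult_le_compat_l; [apply Rabs_pos|]. apply pert_bound; auto. }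
  assert (Ends : forall X Y, box 1 y0 d (X, Y) -> Q0 * Hf Da Db K tL X Y < 0 < Q0 * Hf Da Db K tR X Y).
  { intros X Y Hb. pose proof (Pert tL X Y Hb) as PL. pose proof (Pert tR X Y Hb) as PR.
    assert (ML : q0 * ((Rabs (A tL) + Rabs (Db O tL)) * d) <= q0 * (M * d)).
    { apply Rmult_le_compat_l; [lra|]. apply Rmult_le_compat_r; [lra|]. unfold M.
      pose proof (Rabs_pos (A tR)); pose proof (Rabs_pos (Db O tR)); lra. }
    assert (MR : q0 * ((Rabs (A tR) + Rabs (Db O tR)) * d) <= q0 * (M * d)).
    { apply Rmult_le_compat_l; [lra|]. apply Rmult_le_compat_r; [lra|]. unfold M.
      pose proof (Rabs_pos (A tL)); pose proof (Rabs_pos (Db O tL)); lra. }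
    assert (Q0 * Q0 > 0) by nra.
    split_Rabs; nra. }
  assert (Bsub : forall q, box 1 y0 d q -> Rabs (fst q - 1) < r /\ Rabs (snd q - y0) < r).
  { intros q [B1 B2]; split; lra. }
  set (g := fun q : pt => epsilon (inhabits 0) (fun t => Rabs (t - x0) < r /\ Hf Da Db K t (fst q) (snd q) = 0)).
  assert (Gspec : forall q, box 1 y0 d q -> Rabs (g q - x0) < r /\ Hf Da Db K (g q) (fst q) (snd q) = 0).
  { intros [X Y] Hb. unfold g. apply epsilon_spec.
    destruct (Ends X Y Hb) as [EL ER].
    destruct (IVT (mult_real_fct Q0 (fun t => Hf Da Db K t X Y)) tL tR) as [z [Hz Ez]].
    - apply continuity_scal, H_contin; auto.
    - unfold tL, tR; lra.
    - exact EL.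
    - exact ER.
    - exists z. unfold mult_real_fct in Ez. split.
      + unfold tL, tR in Hz; split_Rabs; lra.
      + destruct (Rmult_integral _ _ Ez); [contradiction|assumption]. }
  assert (Hqbig : forall t X Y, Rabs (t-x0) < r -> Rabs (X-1) < r -> Rabs (Y-y0) < r ->
     q0 / 2 < Rabs (Hq Da Db t X Y)).
  { intros t X Y H1 H2 H3. exact (proj1 (sign_lem _ _ (HQ t X Y H1 H2 H3))). }
  assert (Rel : forall q1 q, box 1 y0 d q1 -> box 1 y0 d q -> exists xi,
     Rabs (xi - g q1) <= Rabs (g q - g q1) /\ q0 / 2 < Rabs (Hq Da Db xi (fst q) (snd q)) /\
     Hq Da Db xi (fst q) (snd q) * (g q - g q1) + (A (g q1) * (fst q - fst q1) + Db O (g q1) * (snd q - snd q1)) = 0).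
  { intros q1 q H1 H2. destruct (Gspec q1 H1) as [R1 E1]. destruct (Gspec q H2) as [R2 E2].
    destruct (H_mvt Da Db K (fst q) (snd q) (g q) (g q1) Ta Tb) as [xi [Bx E]].
    destruct (between_lem _ _ _ _ _ Bx R2 R1) as [Bxi Bxi'].
    destruct (Bsub q H2). exists xi. split; [exact Bxi'|]. split; [apply Hqbig; auto|].
    pose proof (Hf_diff Da Db K (g q1) (fst q) (snd q) (fst q1) (snd q1)) as Df.
    rewrite E1 in Df. rewrite E2 in E. unfold A. lra. }
  exists d, g. split; [exact Hd|]. split; [lra|]. split; [exact Hd3|]. split; [exact Gspec|].
  split; [|split; [|split]].
  - intros [X1 Y1] Hb1. destruct (box_in _ _ _ _ Hb1) as [eb [Heb Pb]].
    destruct (Gspec _ Hb1) as [R1 _]. destruct (Bsub _ Hb1) as [Bx1 By1]; simpl in Bx1, By1.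
    assert (D := impl_deriv (fun s => g (s, Y1)) X1 (g (X1, Y1)) (A (g (X1, Y1))) (q0/2) eb
      (fun xi h => Hq Da Db xi (X1 + h) Y1) ltac:(lra) Heb eq_refl).
    unfold partial_x; simpl. eapply dlim_eq; [apply D|].
    + intros eta Heta. destruct (Hq_cont Da Db (g (X1,Y1)) X1 Y1 eta Ta Tb Heta) as [dd [Hdd Pdd]].
      exists dd; split; auto. intros xi h H1 H2. rewrite Rplus_0_r. apply Pdd; auto.
      * replace (X1 + h - X1) with h by ring; auto.
      * rewrite Rminus_diag, Rabs_R0; auto.
    + intros h Hh. assert (Hb : box 1 y0 d (X1 + h, Y1)).
      { apply Pb; simpl. replace (X1 + h - X1) with h by ring; auto. rewrite Rminus_diag, Rabs_R0; auto. }
      destruct (Rel _ _ Hb1 Hb) as [xi [E1 [E2 E3]]]. simpl in E1, E2, E3.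
      exists xi. split; [exact E1|]. split; [exact E2|].
      replace (A (g (X1, Y1)) * h) with (A (g (X1, Y1)) * (X1 + h - X1) + Db O (g (X1, Y1)) * (Y1 - Y1)) by ring.
      lra.
    + rewrite Rplus_0_r. apply Hqbig; auto.
    + unfold A, Hq; rewrite Rplus_0_r; unfold Rdiv; ring.
  - intros [X1 Y1] Hb1. destruct (box_in _ _ _ _ Hb1) as [eb [Heb Pb]].
    destruct (Gspec _ Hb1) as [R1 _]. destruct (Bsub _ Hb1) as [Bx1 By1]; simpl in Bx1, By1.
    assert (D := impl_deriv (fun s => g (X1, s)) Y1 (g (X1, Y1)) (Db O (g (X1, Y1))) (q0/2) eb
      (fun xi h => Hq Da Db xi X1 (Y1 + h)) ltac:(lra) Heb eq_refl).
    unfold partial_y; simpl. eapply dlim_eq; [apply D|].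
    + intros eta Heta. destruct (Hq_cont Da Db (g (X1,Y1)) X1 Y1 eta Ta Tb Heta) as [dd [Hdd Pdd]].
      exists dd; split; auto. intros xi h H1 H2. rewrite Rplus_0_r. apply Pdd; auto.
      * rewrite Rminus_diag, Rabs_R0; auto.
      * replace (Y1 + h - Y1) with h by ring; auto.
    + intros h Hh. assert (Hb : box 1 y0 d (X1, Y1 + h)).
      { apply Pb; simpl. rewrite Rminus_diag, Rabs_R0; auto. replace (Y1 + h - Y1) with h by ring; auto. }
      destruct (Rel _ _ Hb1 Hb) as [xi [E1 [E2 E3]]]. simpl in E1, E2, E3.
      exists xi. split; [exact E1|]. split; [exact E2|].
      replace (Db O (g (X1, Y1)) * h) with (A (g (X1, Y1)) * (X1 - X1) + Db O (g (X1, Y1)) * (Y1 + h - Y1)) by ring.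
      lra.
    + rewrite Rplus_0_r. apply Hqbig; auto.
    + unfold Hq; rewrite Rplus_0_r; unfold Rdiv; ring.
  - intros q1 Hb1 eps Heps. destruct (box_in _ _ _ _ Hb1) as [eb [Heb Pb]].
    set (BB := Rabs (A (g q1)) + Rabs (Db O (g q1)) + 1).
    assert (HBB : 1 <= BB) by (unfold BB; pose proof (Rabs_pos (A (g q1))); pose proof (Rabs_pos (Db O (g q1))); lra).
    set (e := Rmin eb (eps * q0 / (4 * BB))).
    assert (He1 : e <= eb) by apply Rmin_l. assert (He2 : e <= eps * q0 / (4 * BB)) by apply Rmin_r.
    assert (He : 0 < e) by (apply Rmin_pos; auto; apply Rdiv_lt_0_compat; nra).
    exists e; split; auto. intros q H1 H2.
    assert (Hb : box 1 y0 d q) by (apply Pb; lra).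
    destruct (Rel _ _ Hb1 Hb) as [xi [E1 [E2 E3]]].
    assert (PB := pert_bound (A (g q1)) (Db O (g q1)) (fst q) (snd q) (fst q1) (snd q1) e H1 H2).
    assert (EE : Rabs (Hq Da Db xi (fst q) (snd q)) * Rabs (g q - g q1) =
       Rabs (A (g q1) * (fst q - fst q1) + Db O (g q1) * (snd q - snd q1))).
    { rewrite <- Rabs_mult. rewrite <- Rabs_Ropp. f_equal. lra. }
    assert (Be : BB * e <= eps * q0 / 4).
    { apply Rle_trans with (BB * (eps * q0 / (4 * BB))); [apply Rmult_le_compat_l; lra| right; field; lra]. }
    assert (Hab : (Rabs (A (g q1)) + Rabs (Db O (g q1))) * e < BB * e) by (unfold BB; nra).
    pose proof (Rabs_pos (g q - g q1)).
    nra.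
  - intros q Hb. destruct (Gspec q Hb) as [R1 _]. destruct (Bsub q Hb).
    change (ev (Aps Da Db K g) Qe q) with (Hq Da Db (g q) (fst q) (snd q)).
    pose proof (Hqbig (g q) (fst q) (snd q) R1 H H1). intro Z; rewrite Z, Rabs_R0 in H2; lra.
Qed.

Lemma uniq_lem Da Db K x0 r X Y s t : tw Da -> tw Db ->
  (forall xi, Rabs (xi - x0) < r -> Hq Da Db xi X Y <> 0) ->
  Rabs (s - x0) < r -> Rabs (t - x0) < r ->
  Hf Da Db K s X Y = 0 -> Hf Da Db K t X Y = 0 -> s = t.
Proof.
  intros Ta Tb HQ Hs Ht Es Et. destruct (H_mvt Da Db K X Y s t Ta Tb) as [xi [Bx E]].
  destruct (between_lem _ _ _ _ _ Bx Hs Ht) as [Bxi _].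
  rewrite Es, Et in E. destruct (Rmult_integral (Hq Da Db xi X Y) (s - t)) as [Z|Z]; [lra| |lra].
  exfalso; exact (HQ xi Bxi Z).
Qed.

Lemma ratio_bound X Y y0 d r : Rabs (X - 1) < d -> Rabs (Y - y0) < d -> d <= r -> r <= 1/2 ->
  2 * d * (1 + Rabs y0) < r -> Rabs (Y * / X - y0) < r.
Proof.
  intros H1 H2 H3 H4 H5.
  assert (HX : 1/2 < X) by (split_Rabs; lra).
  replace (Y * / X - y0) with (((Y - y0) - y0 * (X - 1)) * / X) by (field; lra).
  rewrite Rabs_mult, Rabs_inv, (Rabs_right X) by lra.
  assert (N : Rabs ((Y - y0) - y0 * (X - 1)) < d * (1 + Rabs y0)).
  { unfold Rminus at 1. eapply Rle_lt_trans; [apply Rabs_triang|]. rewrite Rabs_Ropp, Rabs_mult.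
    pose proof (Rabs_pos y0). pose proof (Rabs_pos (X-1)). nra. }
  apply Rmult_lt_reg_r with X; [lra|]. rewrite Rmult_assoc, Rinv_l, Rmult_1_r by lra.
  pose proof (Rabs_pos ((Y - y0) - y0 * (X - 1))). nra.
Qed.

Lemma open_nonzero h q : cont2_at h q -> h q <> 0 -> exists e, 0 < e /\ forall q',
  Rabs (fst q' - fst q) < e -> Rabs (snd q' - snd q) < e -> h q' <> 0.
Proof.
  intros C Hn. destruct (C (Rabs (h q))) as [e [He P]]; [apply Rabs_pos_lt; auto|].
  exists e; split; auto. intros q' H1 H2 Z. specialize (P q' H1 H2). rewrite Z in P.
  replace (0 - h q) with (- h q) in P by ring. rewrite Rabs_Ropp in P. lra.
Qed.

Definition Fe K := Add (Add (Mul (Atm 0 0) VX) (Mul (Atm 1 0) VY)) (Cst K).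

Theorem mainTheorem2 (a b : R -> R) (Ha : smooth1 a) (Hb : smooth1 b)
  (U : pt -> Prop) (Hweb : is_3web U fst snd (fab a b)) :
  forall p : pt, U p ->
    exists (V W : pt -> Prop) (phi psi : pt -> pt),
      V p /\ (forall q, V q -> U q) /\ diffeo V W phi psi /\
      leaves_to_lines V phi fst /\ leaves_to_lines V phi snd /\
      leaves_to_lines V phi (fab a b).
Proof.
  intros p Hp. destruct Ha as [Da [Da0 Ta]]. destruct Hb as [Db [Db0 Tb]]. subst a b.
  fold (tw Da) in Ta. fold (tw Db) in Tb.
  destruct p as [x0 y0]. destruct Hweb as [OpU Htr].
  destruct (Htr _ Hp) as [_ [_ [u [v [[Gu1 Gu2] [[Gv1 Gv2] Det]]]]]].
  set (K := 1 - fab (Da O) (Db O) (x0, y0)).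
  assert (H0 : Hf Da Db K x0 1 y0 = 0) by (unfold Hf, K, fab; simpl; ring).
  assert (HQ0 : Hq Da Db x0 1 y0 <> 0).
  { unfold partial_x, partial_y in *; simpl in *.
    assert (U1 : fst u = 0) by (apply (uniqueness_limite (fun t => y0) x0); auto; apply derivable_pt_lim_const).
    assert (U2 : snd u = 1) by (apply (uniqueness_limite (fun t => t) y0); auto; apply derivable_pt_lim_id).
    rewrite U1, U2 in Det.
    assert (D1 : derivable_pt_lim (fun t => Hf Da Db K t 1 y0) x0 (fst v + 0)).
    { apply dlim_loc with (f := ((fun t => fab (Da O) (Db O) (t, y0)) + fct_cte (K - 1))%F) (d := 1); [| lra |].
      - apply derivable_pt_lim_plus; auto. apply derivable_pt_lim_const.
      - intros t _. unfold plus_fct, fct_cte, Hf, fab; simpl; ring. }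
    rewrite (uniqueness_limite _ _ _ _ (H_deriv Da Db K 1 y0 x0 Ta Tb) D1). lra. }
  destruct (OpU _ Hp) as [eU [HeU PU]].
  destruct (Hq_cont Da Db x0 1 y0 (Rabs (Hq Da Db x0 1 y0) / 2) Ta Tb) as [dQ [HdQ PQ]].
  { apply Rdiv_lt_0_compat; [apply Rabs_pos_lt; auto| lra]. }
  set (r := Rmin (Rmin dQ eU) (1/2)).
  assert (Hr1 : r <= dQ) by (unfold r; eapply Rle_trans; [apply Rmin_l| apply Rmin_l]).
  assert (Hr2 : r <= eU) by (unfold r; eapply Rle_trans; [apply Rmin_l| apply Rmin_r]).
  assert (Hr3 : r <= 1/2) by (unfold r; apply Rmin_r).
  assert (Hr : 0 < r) by (unfold r; repeat apply Rmin_pos; lra).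
  assert (HQ : forall t X Y, Rabs (t-x0) < r -> Rabs (X-1) < r -> Rabs (Y-y0) < r ->
     Rabs (Hq Da Db t X Y - Hq Da Db x0 1 y0) < Rabs (Hq Da Db x0 1 y0) / 2).
  { intros; apply PQ; lra. }
  destruct (implicit_fn Da Db K x0 y0 r Ta Tb Hr Hr3 HQ0 H0 HQ) as
    [d [g [Hd [Hdr [Hd3 [Gspec [Gx [Gy [Gc GQ]]]]]]]]].
  assert (GA : goodAS (Ap Da Db) (fun _ => True)) by (apply good_Ap; auto; apply open_all).
  assert (contF : forall q, cont2_at (ev (Ap Da Db) (Fe K)) q).
  { intro q. apply (ev_cont_S _ (fun _ => True)); auto. intros q' _; simpl; tauto. }
  pose (Sphi := fun q => ev (Ap Da Db) (Fe K) q <> 0).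
  assert (OpS : open2 Sphi).
  { intros q Hq. destruct (open_nonzero _ q (contF q) Hq) as [e [He P]]. exists e; split; auto. }
  assert (GS : goodAS (Ap Da Db) Sphi) by (apply good_Ap; auto).
  assert (okI : okS (Ap Da Db) Sphi (Inv (Fe K))).
  { intros q Hq. split; [exact Hq| simpl; tauto]. }
  assert (okM : okS (Ap Da Db) Sphi (Mul VY (Inv (Fe K)))).
  { intros q Hq. split; [simpl; tauto| exact (okI q Hq)]. }
  assert (GW : goodAS (Aps Da Db K g) (box 1 y0 d)) by (apply good_Aps; auto; apply open_box).
  assert (Xpos : forall q, box 1 y0 d q -> 1/2 < fst q).
  { intros q [B1 _]. split_Rabs; lra. }
  pose (phi := fun q => (ev (Ap Da Db) (Inv (Fe K)) q, ev (Ap Da Db) (Mul VY (Inv (Fe K))) q)).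
  pose (psi := fun q => (ev (Aps Da Db K g) (Atm 2 0) q, ev (Aps Da Db K g) (Mul VY (Inv VX)) q)).
  assert (FpsiW : forall q, box 1 y0 d q -> ev (Ap Da Db) (Fe K) (psi q) = / fst q).
  { intros [X Y] Hb. pose proof (Xpos _ Hb) as HX. destruct (Gspec _ Hb) as [_ E].
    simpl in HX, E |- *. unfold Hf in E.
    apply Rmult_eq_reg_r with X; [| lra]. rewrite Rinv_l by lra.
    replace ((Da O (g (X, Y)) * g (X, Y) + Db O (g (X, Y)) * (Y * / X) + K) * X)
      with ((Da O (g (X, Y)) * g (X, Y) + K) * X + Db O (g (X, Y)) * Y) by (field; lra). lra. }
  assert (PhiPsi : forall q, box 1 y0 d q -> phi (psi q) = q).
  { intros [X Y] Hb. pose proof (Xpos _ Hb) as HX. pose proof (FpsiW _ Hb) as E. simpl in HX.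
    unfold phi. change (ev (Ap Da Db) (Inv (Fe K)) (psi (X, Y))) with (/ ev (Ap Da Db) (Fe K) (psi (X, Y))).
    change (ev (Ap Da Db) (Mul VY (Inv (Fe K))) (psi (X, Y))) with (snd (psi (X,Y)) * / ev (Ap Da Db) (Fe K) (psi (X, Y))).
    rewrite E. simpl. f_equal; field; lra. }
  pose (V := fun q => box x0 y0 r q /\ Sphi q /\ box 1 y0 d (phi q)).
  assert (PsiPhi : forall q, V q -> psi (phi q) = q).
  { intros [x y] [[Bx By] [Sq Wq]]. unfold Sphi in Sq. simpl in Bx, By, Sq.
    assert (Wq' := Wq). destruct Wq' as [W1 W2].
    unfold psi. simpl ev at 1. f_equal.
    - apply (uniq_lem Da Db K x0 r (fst (phi (x,y))) (snd (phi (x,y)))); auto.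
      + intros xi Hxi Z. destruct (sign_lem _ _ (HQ xi (fst (phi (x,y))) (snd (phi (x,y))) Hxi ltac:(lra) ltac:(lra))) as [S1 _].
        rewrite Z, Rabs_R0 in S1. pose proof (Rabs_pos_lt _ HQ0). lra.
      + apply (Gspec _ Wq).
      + apply (Gspec _ Wq).
      + unfold Hf, phi; simpl. field. exact Sq.
    - unfold phi; simpl. field. exact Sq. }
  exists V, (box 1 y0 d), phi, psi.
  assert (Vp : V (x0, y0)).
  { assert (F1 : ev (Ap Da Db) (Fe K) (x0, y0) = 1) by (simpl; unfold K, fab; simpl; ring).
    split; [|split].
    - split; simpl; rewrite Rminus_diag, Rabs_R0; lra.
    - unfold Sphi; rewrite F1; lra.
    - unfold phi. change (ev (Ap Da Db) (Inv (Fe K)) (x0,y0)) with (/ ev (Ap Da Db) (Fe K) (x0, y0)).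
      change (ev (Ap Da Db) (Mul VY (Inv (Fe K))) (x0,y0)) with (y0 * / ev (Ap Da Db) (Fe K) (x0, y0)).
      rewrite F1, Rinv_1, Rmult_1_r. split; simpl; rewrite Rminus_diag, Rabs_R0; lra. }
  split; [exact Vp|]. split.
  { intros q [[B1 B2] _]. apply PU; simpl; lra. }
  split; [|split; [|split]].
  - split; [|split; [apply open_box|split; [|split; [|split; [|split; [|split; [|split; [|split]]]]]]]].
    + intros q [Bq [Sq Wq]].
      destruct (box_in _ _ _ _ Bq) as [e1 [He1 P1]].
      destruct (open_nonzero _ q (contF q) Sq) as [e2 [He2 P2]].
      destruct Wq as [W1 W2].
      destruct (box_nbhd 1 y0 d (fun q => fst (phi q)) (fun q => snd (phi q)) q
        (ev_cont_S _ _ _ q GS okI Sq) (ev_cont_S _ _ _ q GS okM Sq) W1 W2) as [e3 [He3 P3]].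
      exists (Rmin e1 (Rmin e2 e3)). split; [repeat apply Rmin_pos; auto|].
      pose proof (Rmin_l e1 (Rmin e2 e3)). pose proof (Rmin_r e1 (Rmin e2 e3)).
      pose proof (Rmin_l e2 e3). pose proof (Rmin_r e2 e3).
      intros q' Hq1 Hq2. split; [apply P1; lra|]. split; [apply P2; lra|]. apply P3; lra.
    + intros q Vq; apply Vq.
    + intros q Wq. split; [|split].
      * destruct (Gspec _ Wq) as [R1 _]. destruct Wq as [W1 W2]. split; simpl.
        -- exact R1.
        -- apply (ratio_bound (fst q) (snd q) y0 d r); auto.
      * unfold Sphi. rewrite (FpsiW _ Wq). apply Rinv_neq_0_compat. pose proof (Xpos _ Wq); lra.
      * rewrite (PhiPsi _ Wq). exact Wq.
    + exact PsiPhi.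
    + exact PhiPsi.
    + apply smooth2_sub with Sphi; [exact (smooth_ev (Ap Da Db) Sphi (Inv (Fe K)) GS okI)| intros q Vq; apply Vq].
    + apply smooth2_sub with Sphi; [exact (smooth_ev (Ap Da Db) Sphi (Mul VY (Inv (Fe K))) GS okM)| intros q Vq; apply Vq].
    + apply (smooth_ev (Aps Da Db K g) (box 1 y0 d) (Atm 2 0) GW). intros q _; exact I.
    + apply (smooth_ev (Aps Da Db K g) (box 1 y0 d) (Mul VY (Inv VX)) GW).
      intros q Wq. simpl. pose proof (Xpos _ Wq). split; [tauto|]. split; [lra| tauto].
  - intro c. destruct (classic (Da O c * c + K = 0 /\ Db O c = 0)) as [[Z1 Z2]|NZ].
    + exists 1, 0, 0. split; [left; lra|]. intros [x y] [_ [Sq _]] Ec. simpl in Ec; subst x.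
      exfalso. apply Sq. simpl. rewrite Z2. lra.
    + exists (Da O c * c + K), (Db O c), 1. split.
      * apply not_and_or in NZ; exact NZ.
      * intros [x y] [_ [Sq _]] Ec. simpl in Ec; subst x. unfold Sphi in Sq; simpl in Sq |- *. field; exact Sq.
  - intro c. exists c, (-1), 0. split; [right; lra|].
    intros [x y] [_ [Sq _]] Ec. simpl in Ec; subst y. unfold phi; simpl. ring.
  - intro c. exists 1, 0, (/ (c + K)). split; [left; lra|].
    intros [x y] [_ [Sq _]] Ec. unfold Sphi in Sq. unfold fab in Ec; simpl in Ec, Sq |- *.
    replace (Da O x * x + Db O x * y + K) with (c + K) by (rewrite <- Ec; ring). ring.
Qed.
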